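(* Let $n\ge2$, $L\ge0$, $k\in\{0,\dots,n-1\}$, and let $p=(\lambda_0,\dots,\lambda_L)$ be a path with $\lambda_0=2\Lambda_0$ and $\lambda_L=\Lambda_k+\Lambda_{L-k}$. Let $x_1<\dots<x_N$ be the positions and $h_1,\dots,h_N$ the heights of the domain walls of $p$, and put $W=x_N$ (the number of nodes in the first row of the associated K-graph) and $h_N$ the height of the last domain wall, with the convention $W=0$, $h_N=h_0=n$ if $N=0$. Then $W-h_N\equiv 2k \pmod n$.
   Context: $\Lambda_0,\dots,\Lambda_{n-1}$ are the fundamental weights of the affine algebra $\widehat{sl(n)}$; indices are extended to all integers modulo $n$ ($\Lambda_i=\Lambda_{i'}$ when $i\equiv i'\pmod n$). For $i\in\mathbb{Z}$ set $\hat{i}=\Lambda_{i+1}-\Lambda_i$ (depending only on $i \bmod n$; the weights $\hat0,\dots,\widehat{n-1}$ are distinct). $P_2^+=\{\Lambda_a+\Lambda_b: 0\le a\le b\le n-1\}$. A path is a sequence $(\lambda_0,\dots,\lambda_L)$ of elements of $P_2^+$ with $\lambda_{\ell+1}-\lambda_\ell\in\{\hat0,\dots,\widehat{n-1}\}$. For a path with $\lambda_0=2\Lambda_0$, $\lambda_L=\Lambda_k+\Lambda_{L-k}$, set $\lambda_{L+1}=\Lambda_k+\Lambda_{L-k+1}$ and define $\mu_\ell\in\{0,\dots,n-1\}$ ($0\le\ell\le L$) by $\widehat{\mu_\ell}=\lambda_{\ell+1}-\lambda_\ell$. There is a domain wall at position $\ell\in\{1,\dots,L\}$ of height $h\in\{1,\dots,n-1\}$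 if $\mu_\ell-\mu_{\ell-1}\equiv h+1\pmod n$. *)

(* Defs.v *)
From HB Require Import structures.
From mathcomp Require Import all_boot all_order all_algebra.
Unset Implicit Arguments. Unset Printing Implicit Defensive.
Import Order.TTheory GRing.Theory Num.Theory.
Local Open Scope ring_scope.

(* Weights in the span of the fundamental weights Lambda_0..Lambda_{n-1} of
   affine sl(n), which are linearly independent: a weight is recorded by its
   coefficient vector over 'I_n. *)
Definition weight (n : nat) := {ffun 'I_n -> int}.

Definition Lam (n : nat) (i : int) : weight n :=
  [ffun j : 'I_n => if ((j : nat)%:Z == (i %% n%:Z)%Z) then 1 else 0].

Definition hat (n : nat) (i : int) : weight n := Lam n (i + 1) - Lam n i.

Definition inP2 (n : nat) (lam : weight n) : Prop :=
  exists a b : 'I_n, (a <= b)%N /\ lam = Lam n a + Lam n b.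

Definition is_path (n L : nat) (lam : nat -> weight n) : Prop :=
  (forall l, (l <= L)%N -> inP2 n (lam l)) /\
  (forall l, (l < L)%N -> exists i : 'I_n, lam l.+1 - lam l = hat n i).

Definition ext_path (n L k : nat) (lam : nat -> weight n) (l : nat) : weight n :=
  if l == L.+1 then Lam n k%:Z + Lam n (L%:Z - k%:Z + 1) else lam l.

Definition is_mu (n L k : nat) (lam : nat -> weight n) (mu : nat -> 'I_n) : Prop :=
  forall l, (l <= L)%N ->
    hat n (mu l : nat)%:Z = ext_path n L k lam l.+1 - ext_path n L k lam l.

Definition is_wall (n L : nat) (mu : nat -> 'I_n) (l h : nat) : Prop :=
  [/\ (1 <= l <= L)%N, (1 <= h <= n.-1)%N &
      ((mu l : nat)%:Z - (mu l.-1 : nat)%:Z = h.+1%:Z %[mod n%:Z])%Z].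

Definition last_wall (n L : nat) (mu : nat -> 'I_n) (W hN : nat) : Prop :=
  (is_wall n L mu W hN /\ forall l h, is_wall n L mu l h -> (l <= W)%N)
  \/ ((forall l h, ~ is_wall n L mu l h) /\ W = 0%N /\ hN = n).

(* Main.v *)
Require Import Defs.
From HB Require Import structures.
From mathcomp Require Import all_boot all_order all_algebra zify.
Import Order.TTheory GRing.Theory Num.Theory.
Local Open Scope ring_scope.

Lemma dvdlin (a b c : int) {N x y w z : int} :
  (N %| x)%Z -> (N %| y)%Z -> (N %| w)%Z -> z = a * x + b * y + c * w -> (N %| z)%Z.
Proof. by move=> Hx Hy Hw ->; rewrite !rpredD // dvdz_mull. Qed.

Lemma ndvd_small (N x : int) : 0 < x < N -> ~~ (N %| x)%Z.
Proof.
move=> /andP [h1 h2]; rewrite dvdzE; apply/negP => /dvdn_leq.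
have -> : (0 < `|x|)%N by lia.
move=> /(_ isT); lia.
Qed.

Lemma Lam_at n (i : int) (j : 'I_n) :
  Lam n i j = if (n%:Z %| j%:Z - i)%Z then 1 else 0.
Proof.
rewrite ffunE -eqz_mod_dvd (modz_small (m := j%:Z)) //.
by apply/andP; split => //; rewrite ltz_nat ltn_ord.
Qed.

Lemma Lam_cong n (i i' : int) : (n%:Z %| i - i')%Z -> Lam n i = Lam n i'.
Proof.
move=> H; apply/ffunP => j; rewrite !Lam_at.
case: (boolP (n%:Z %| j%:Z - i')%Z) => H'.
  by rewrite (dvdlin 1 (-1) 0 H' H H) //; lia.
case: ifP => // H2; case/negP: H'.
by apply: (dvdlin 1 1 0 H2 H H); lia.
Qed.

Lemma exists_ord n (x : int) : (0 < n)%N -> exists j : 'I_n, (n%:Z %| j%:Z - x)%Z.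
Proof.
move=> n0.
have nz : n%:Z != 0 by lia.
have r0 := modz_ge0 x nz.
have r1 : (x %% n%:Z)%Z < n%:Z by apply: ltz_pmod; lia.
have H : (`|(x %% n%:Z)%Z| < n)%N by lia.
exists (Ordinal H) => /=.
rewrite -eqz_mod_dvd gez0_abs // modz_mod //.
Qed.

Lemma ndvd1 n : (2 <= n)%N -> ~~ (n%:Z %| 1)%Z.
Proof. move=> n2; apply: ndvd_small; apply/andP; split; lia. Qed.

Lemma hat_at n (i : int) (j : 'I_n) : hat n i j = Lam n (i + 1) j - Lam n i j.
Proof. by rewrite /hat; move: (Lam n (i + 1)) (Lam n i) => f g; rewrite !ffunE. Qed.

Lemma hat_inj n (a b : int) : (2 <= n)%N -> hat n a = hat n b -> (n%:Z %| a - b)%Z.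
Proof.
move=> n2 E.
have [j Hj] := exists_ord n (a + 1) (ltnW n2).
have := congr1 (fun f : weight n => f j) E; rewrite !hat_at !Lam_at Hj.
have -> : (n%:Z %| j%:Z - a)%Z = false.
  apply/negP => H; case/negP: (ndvd1 n n2).
  by apply: (dvdlin 1 (-1) 0 H Hj Hj); lia.
case: ifP => H1; case: ifP => H2 //; try lia.
by move=> _; apply: (dvdlin 1 (-1) 0 H1 Hj Hj); lia.
Qed.

Lemma ind01 n (i : int) (j : 'I_n) : 0 <= Lam n i j <= 1.
Proof. by rewrite Lam_at; case: ifP. Qed.

Lemma P2_ge0 n (a b : int) (j : 'I_n) : 0 <= (Lam n a + Lam n b) j.
Proof. by rewrite ffunE !Lam_at; case: ifP; case: ifP. Qed.

Lemma zcancel (V : zmodType) (A B C E : V) : A + B = E + B - C -> E = A + C.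
Proof.
move=> ec. rewrite -(addrK (B - C) E) addrA -ec opprB.
rewrite -!addrA; congr (_ + _). by rewrite addrCA subrr addr0.
Qed.

Lemma addf_at n (f g : weight n) j : (f + g) j = f j + g j.
Proof. by rewrite !ffunE. Qed.
Lemma subf_at n (f g : weight n) j : (f - g) j = f j - g j.
Proof. by rewrite !ffunE. Qed.
Lemma oppf_at n (f : weight n) j : (- f) j = - f j.
Proof. by rewrite !ffunE. Qed.
Lemma hat_at' n (i : int) (j : 'I_n) : hat n i j = Lam n (i + 1) j - Lam n i j.
Proof. by rewrite /hat subf_at. Qed.

Ltac cl := repeat match goal with
 | H : is_true (_ \in dvdz _) |- _ => clear H
 | H : forall _, _ |- _ => clear H
 | H : @eq (weight _) _ _ |- _ => clear H
 | H : last_wall _ _ _ _ _ |- _ => clear H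
 | H : is_path _ _ _ |- _ => clear H
 | H : is_mu _ _ _ _ _ |- _ => clear H
 end.
Ltac lia' := cl; lia.
Ltac wlin := apply/ffunP => ?; rewrite !ffunE; lia.

Theorem lemma3 (n L k : nat) (lam : nat -> weight n) (mu : nat -> 'I_n)
    (W hN : nat) :
  (2 <= n)%N -> (k < n)%N ->
  is_path n L lam ->
  lam 0%N = Lam n 0 + Lam n 0 ->
  lam L = Lam n k%:Z + Lam n (L%:Z - k%:Z) ->
  is_mu n L k lam mu ->
  last_wall n L mu W hN ->
  (W%:Z - hN%:Z = 2%:Z * k%:Z %[mod n%:Z])%Z.
Proof.
move=> n2 kn [Hp Hst] H0 HL Hmu Hlw.
set e := ext_path n L k lam.
have eS : forall l, (l <= L)%N -> e l.+1 = e l + hat n (mu l : nat)%:Z.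
  by move=> l lL; rewrite (Hmu l lL) addrC subrK.
have eL : e L = lam L by rewrite /e /ext_path (ltn_eqF (ltnSn L)).
have eL1 : e L.+1 = Lam n k%:Z + Lam n (L%:Z - k%:Z + 1) by rewrite /e /ext_path eqxx.
have elam : forall l, (l <= L)%N -> e l = lam l.
  move=> l lL; rewrite /e /ext_path ifN //; by apply/negP => /eqP E; rewrite E ltnn in lL.
have nonneg : forall l, (l <= L.+1)%N -> forall j, 0 <= e l j.
  move=> l; rewrite leq_eqVlt => /orP [/eqP -> | lL] j.
    by rewrite eL1 P2_ge0.
  rewrite elam //; have [a [b [_ ->]]] := Hp l lL.
  by rewrite P2_ge0.
have muL : (n%:Z %| (mu L : nat)%:Z - (L%:Z - k%:Z))%Z.
  apply: hat_inj => //.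
  have := eS L (leqnn L); rewrite eL1 eL HL /hat => E.
  apply/ffunP => j; have := congr1 (fun f : weight n => f j) E; rewrite !ffunE; lia'.
have nz : n%:Z != 0 by lia'.
have step : forall l, (1 <= l <= L)%N -> (forall h, ~ is_wall n L mu l h) ->
    (n%:Z %| (mu l : nat)%:Z - ((mu l.-1 : nat)%:Z + 1))%Z.
  move=> l Hl Hnw.
  have r0 := modz_ge0 ((mu l : nat)%:Z - (mu l.-1 : nat)%:Z - 1) nz.
  have r1 : (((mu l : nat)%:Z - (mu l.-1 : nat)%:Z - 1) %% n%:Z)%Z < n%:Z.
    by apply: ltz_pmod; lia'.
  have hx := divz_eq ((mu l : nat)%:Z - (mu l.-1 : nat)%:Z - 1) n%:Z.
  have D : (n%:Z %| (((mu l : nat)%:Z - (mu l.-1 : nat)%:Z - 1) %/ n%:Z)%Z * n%:Z)%Z.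
    by apply: dvdz_mull; exact: dvdzz.
  move: r0 r1 hx D.
  move: (((mu l : nat)%:Z - (mu l.-1 : nat)%:Z - 1) %/ n%:Z)%Z
        (((mu l : nat)%:Z - (mu l.-1 : nat)%:Z - 1) %% n%:Z)%Z => q r r0 r1 hx D.
  case: (eqVneq r 0) => rz.
    by apply: (dvdlin 1 0 0 D D D); lia'.
  exfalso; apply: (Hnw `|r|%N); split => //.
    by apply/andP; split; lia'.
  apply/eqP; rewrite eqz_mod_dvd.
  by apply: (dvdlin 1 0 0 D D D); lia'.
have chain : forall W0, (forall l, (W0 < l <= L)%N ->
    (n%:Z %| (mu l : nat)%:Z - ((mu l.-1 : nat)%:Z + 1))%Z) ->
    forall d, (W0 + d <= L)%N ->
    (n%:Z %| (mu (W0 + d)%N : nat)%:Z - ((mu W0 : nat)%:Z + d%:Z))%Z.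
  move=> W0 Hs; elim=> [|d IH] Hd.
    have z := dvdz0 n%:Z.
    by rewrite addn0; apply: (dvdlin 0 0 0 z z z); lia'.
  have H := Hs (W0 + d.+1)%N ltac:(lia').
  rewrite addnS /= in H.
  have IH' := IH ltac:(lia').
  rewrite addnS.
  by apply: (dvdlin 1 1 0 H IH' IH'); lia'.
have echain : forall W0, (forall l, (W0 < l <= L)%N ->
    (n%:Z %| (mu l : nat)%:Z - ((mu l.-1 : nat)%:Z + 1))%Z) ->
    forall d, (W0 + d <= L.+1)%N ->
    e (W0 + d)%N = e W0 + Lam n ((mu W0 : nat)%:Z + d%:Z) - Lam n (mu W0 : nat)%:Z.
  move=> W0 Hs; elim=> [|d IH] Hd.
    by rewrite addn0 addr0 addrK.
  have c := chain W0 Hs d ltac:(lia').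
  rewrite addnS eS; last by lia'.
  rewrite IH; last by lia'.
  rewrite /hat (Lam_cong n ((mu (W0 + d)%N : nat)%:Z + 1) ((mu W0 : nat)%:Z + d.+1%:Z)); last first.
    by apply: (dvdlin 1 0 0 c c c); lia'.
  rewrite (Lam_cong n ((mu (W0 + d)%N : nat)%:Z) ((mu W0 : nat)%:Z + d%:Z)); last first.
    by apply: (dvdlin 1 0 0 c c c); lia'.
  wlin.
have tailW : forall W0, (W0 <= L)%N -> (forall l, (W0 < l <= L)%N ->
    (n%:Z %| (mu l : nat)%:Z - ((mu l.-1 : nat)%:Z + 1))%Z) ->
    e W0 = Lam n k%:Z + Lam n (mu W0 : nat)%:Z /\
    (n%:Z %| (mu W0 : nat)%:Z - (W0%:Z - k%:Z))%Z.
  move=> W0 W0L Hs.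
  have c := chain W0 Hs (L - W0)%N ltac:(lia').
  rewrite subnKC // in c.
  have m2 : (n%:Z %| (mu W0 : nat)%:Z - (W0%:Z - k%:Z))%Z.
    by apply: (dvdlin 1 (-1) 0 muL c c); lia'.
  split => //.
  have ec := echain W0 Hs (L.+1 - W0)%N ltac:(lia').
  rewrite subnKC in ec; last by lia'.
  rewrite eL1 (Lam_cong n ((mu W0 : nat)%:Z + (L.+1 - W0)%N%:Z) (L%:Z - k%:Z + 1)) in ec; last first.
    by apply: (dvdlin 1 0 0 m2 m2 m2); lia'.
  move: (Lam n k%:Z) (Lam n (L%:Z - k%:Z + 1)) (Lam n (mu W0 : nat)%:Z) ec => A B C ec.
  exact: zcancel ec.
case: Hlw => [[Hw Hmax] | [Hnw [-> ->]]].
  case: Hw => Hl Hh Hc.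
  have Hs : forall l, (W < l <= L)%N ->
      (n%:Z %| (mu l : nat)%:Z - ((mu l.-1 : nat)%:Z + 1))%Z.
    move=> l Hl'; apply: step; first by lia'.
    by move=> h Hwl; have := Hmax l h Hwl; lia'.
  have [eW mW] := tailW W ltac:(lia') Hs.
  have eSW := eS W.-1 ltac:(lia').
  rewrite prednK in eSW; last by lia'.
  have [j Hj] := exists_ord n ((mu W.-1 : nat)%:Z + 1) ltac:(lia').
  have nn := nonneg W.-1 ltac:(lia') j.
  have := congr1 (fun f : weight n => f j) eSW.
  rewrite eW !addf_at !oppf_at !Lam_at Hj.
  have -> : (n%:Z %| j%:Z - (mu W.-1 : nat)%:Z)%Z = false.
    apply/negP => H; case/negP: (ndvd1 n n2).
    by apply: (dvdlin 1 (-1) 0 H Hj Hj); lia'.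
  move=> E; move/eqP: Hc; rewrite eqz_mod_dvd => Hc.
  apply/eqP; rewrite eqz_mod_dvd; move: E.
  case: ifP => Hjk; case: ifP => Hjm => E.
  - exfalso.
    have B : (n%:Z %| (mu W : nat)%:Z - ((mu W.-1 : nat)%:Z + 1))%Z.
      by apply: (dvdlin 1 (-1) 0 Hj Hjm Hjm); lia'.
    have : (n%:Z %| hN%:Z)%Z by apply: (dvdlin (-1) 1 0 Hc B B); lia'.
    by apply/negP; apply: ndvd_small; apply/andP; split; lia'.
  - have B : (n%:Z %| k%:Z - ((mu W.-1 : nat)%:Z + 1))%Z.
      by apply: (dvdlin 1 (-1) 0 Hj Hjk Hjk); lia'.
    by apply: (dvdlin (-1) (-1) 1 mW B Hc); lia'.
  - exfalso.
    have B : (n%:Z %| (mu W : nat)%:Z - ((mu W.-1 : nat)%:Z + 1))%Z.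
      by apply: (dvdlin 1 (-1) 0 Hj Hjm Hjm); lia'.
    have : (n%:Z %| hN%:Z)%Z by apply: (dvdlin (-1) 1 0 Hc B B); lia'.
    by apply/negP; apply: ndvd_small; apply/andP; split; lia'.
  - exfalso; lia'.
have Hs : forall l, (0 < l <= L)%N ->
    (n%:Z %| (mu l : nat)%:Z - ((mu l.-1 : nat)%:Z + 1))%Z.
  by move=> l Hl'; apply: step => //; move=> h; apply: Hnw.
have [e0 m0] := tailW 0%N (leq0n L) Hs.
rewrite elam // H0 in e0.
have [j Hj] := exists_ord n 0 ltac:(lia').
have := congr1 (fun f : weight n => f j) e0.
rewrite !addf_at !Lam_at Hj.
case: ifP => Hjk => E; last by move: E; case: ifP => _; lia'.
have Hk : (n%:Z %| k%:Z)%Z by apply: (dvdlin 1 (-1) 0 Hj Hjk Hjk); lia'.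
have k0 : k = 0%N.
  case: (posnP k) => // kp; exfalso; move: Hk; apply/negP.
  by apply: ndvd_small; apply/andP; split; lia'.
subst k; apply/eqP; rewrite eqz_mod_dvd.
have D := dvdzz n%:Z.
by apply: (dvdlin (-1) 0 0 D D D); lia'.
Qed.
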